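(* Let $r>1$ and let $k,\ell,m$ be arbitrary positive integers. Let $x_0$ be chosen uniformly at random from the vertex set of the $(k,\ell,m)$-megastar and run the Moran process with fitness $r$ on it with initial mutant $x_0$. Then the process goes extinct with probability at least $k/(2r(m+k))$.
   Context: Moran process: given a directed graph $G$ and fitness $r$, one vertex $x_0$ is a mutant, the rest non-mutants. At each step a vertex $v$ is chosen with probability proportional to fitness (mutants $r$, non-mutants $1$), an out-neighbour $w$ of $v$ is chosen uniformly at random and the state of $v$ is copied to $w$. Extinction: eventually no vertex is a mutant. The $(k,\ell,m)$-megastar: disjoint union of reservoirs $R_1,\dots,R_\ell$ (size $m$), cliques $K_1,\dots,K_\ell$ (size $k$), feeders $a_1,\dots,a_\ell$, and centre $v^*$; edges from $v^*$ to all reservoir vertices, from each vertex of $R_i$ to $a_i$, from $a_i$ to each vertex of $K_i$, both directions between distinct vertices of each $K_i$, and from every clique vertex to $v^*$. *)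

(* Defs.v *)
From HB Require Import structures.
From mathcomp Require Import all_boot all_order all_algebra.
From mathcomp Require Import all_classical all_reals all_analysis.
Set Implicit Arguments. Unset Strict Implicit. Unset Printing Implicit Defensive.
Import Order.TTheory GRing.Theory Num.Theory.
Import numFieldNormedType.Exports.
Local Open Scope ring_scope.

(* A state is the set of mutant vertices. *)
Section Moran.
Variables (R : realType) (V : finType) (E : rel V) (r : R).

Definition fit (S : {set V}) (v : V) : R := if v \in S then r else 1.
Definition totfit (S : {set V}) : R := \sum_(v : V) fit S v.
Definition outdeg (v : V) : nat := #|[set w | E v w]|.

Definition moran_update (S : {set V}) (v w : V) : {set V} :=
  if v \in S then w |: S else S :\ w.

Definition moran_step (S S' : {set V}) : R :=
  \sum_(v : V) \sum_(w : V | E v w)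
     (fit S v / totfit S) * (outdeg v)%:R^-1 * (S' == moran_update S v w)%:R.

Fixpoint moran_dist (x0 : V) (t : nat) : {set V} -> R :=
  match t with
  | 0 => fun S => (S == [set x0])%:R
  | t'.+1 => fun S' => \sum_(S : {set V}) moran_dist x0 t' S * moran_step S S'
  end.

(* extinction probability: probability of eventually reaching the (absorbing)
   empty mutant set = limit of P(no mutants at time t) as t -> oo *)
Definition extinction_prob (x0 : V) : R := limn (fun t => moran_dist x0 t (finset.set0 : {set V})).
End Moran.

(* vertices: reservoirs R_i (pairs (i,j), j < m), cliques K_i (pairs (i,j),
   j < k), feeders a_i, centre v*. *)
Definition megastar_vertex (k l m : nat) : finType :=
  ((('I_l * 'I_m) + ('I_l * 'I_k)) + ('I_l + unit))%type.

Definition megastar_edge (k l m : nat) : rel (megastar_vertex k l m) :=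
  fun x y =>
  match x, y with
  | inr (inr tt), inl (inl _) => true                          (* v* -> R_i *)
  | inl (inl (i, _)), inr (inl i') => i == i'                  (* R_i -> a_i *)
  | inr (inl i), inl (inr (i', _)) => i == i'                  (* a_i -> K_i *)
  | inl (inr (i, j)), inl (inr (i', j')) => (i == i') && (j != j') (* K_i clique *)
  | inl (inr _), inr (inr tt) => true                          (* K_i -> v* *)
  | _, _ => false
  end.

(* Main.v *)
Require Import Defs.
From HB Require Import structures.
From mathcomp Require Import all_boot all_order all_algebra.
From mathcomp Require Import all_classical all_reals all_analysis.
From mathcomp Require Import ring lra zify.
Import Order.TTheory GRing.Theory Num.Theory.
Import numFieldNormedType.Exports.
Local Open Scope ring_scope.

Section Gen.
Variables (R : realType) (V : finType) (E : rel V) (r : R).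
Hypothesis r0 : 0 < r.
Hypothesis out0 : forall v, (0 < outdeg E v)%N.

Lemma fit_gt0 (S : {set V}) v : 0 < fit r S v.
Proof. by rewrite /fit; case: ifP. Qed.

Lemma totfit_gt0 (x : V) (S : {set V}) : 0 < totfit r S.
Proof.
rewrite /totfit (bigD1 x) //=.
have := fit_gt0 S x.
have : 0 <= \sum_(v | v != x) fit r S v by apply: sumr_ge0 => v _; apply: ltW; apply: fit_gt0.
lra.
Qed.

Lemma step_ge0 (S S' : {set V}) : 0 <= moran_step E r S S'.
Proof.
apply: sumr_ge0 => v _; apply: sumr_ge0 => w _.
apply: mulr_ge0; last exact: ler0n.
apply: mulr_ge0; last by rewrite invr_ge0 ler0n.
apply: divr_ge0; apply: ltW; [exact: fit_gt0 | exact: (totfit_gt0 v)].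
Qed.

Lemma dist_ge0 x t (S : {set V}) : 0 <= moran_dist E r x t S.
Proof.
elim: t S => [|t IH] S /=; first exact: ler0n.
apply: sumr_ge0 => S0 _; apply: mulr_ge0 => //; exact: step_ge0.
Qed.

Lemma sum_out v : \sum_(w | E v w) (outdeg E v)%:R^-1 = 1 :> R.
Proof.
have -> : \sum_(w | E v w) (outdeg E v)%:R^-1 = \sum_(w in [set w | E v w]) (outdeg E v)%:R^-1 :> R.
  by apply: eq_bigl => w; rewrite inE.
rewrite sumr_const -[_ *+ _]mulr_natr mulVf //.
by rewrite pnatr_eq0 -lt0n out0.
Qed.

Lemma rowsum_aux (x : V) (S : {set V}) : \sum_v \sum_(w | E v w) (fit r S v / totfit r S * (outdeg E v)%:R^-1) = 1.
Proof.
under eq_bigr => v _ do rewrite -mulr_sumr sum_out mulr1.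
rewrite -mulr_suml mulfV //; apply: lt0r_neq0; exact: (totfit_gt0 x).
Qed.

Lemma rowsum (x : V) (S : {set V}) : \sum_S' moran_step E r S S' = 1.
Proof.
rewrite /moran_step exchange_big /= -[RHS](rowsum_aux x S); apply: eq_bigr => v _.
rewrite exchange_big /=; apply: eq_bigr => w _.
rewrite -mulr_sumr. idtac.
have H1 : \sum_(S' : {set V}) ((S' == moran_update S v w)%:R : R) = 1.
  rewrite (bigD1 (moran_update S v w)) //= eqxx.
  rewrite [X in _ + X]big1 ?addr0 // => S' /negPf -> //.
by rewrite H1 mulr1.
Qed.

Lemma dist_sum x t : \sum_S moran_dist E r x t S = 1.
Proof.
elim: t => [|t IH] /=.
  by rewrite (bigD1 [set x]) //= eqxx big1 ?addr0 // => S /negPf ->.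
rewrite exchange_big /= -[RHS]IH; apply: eq_bigr => S _.
by rewrite -mulr_sumr (rowsum x) mulr1.
Qed.

Lemma dist_le1 x t (S : {set V}) : moran_dist E r x t S <= 1.
Proof.
rewrite -(dist_sum x t) (bigD1 S) //= lerDl; apply: sumr_ge0 => *; exact: dist_ge0.
Qed.


Lemma T_ge0 (x : V) (S : {set V}) (v : V) (b : bool) : 0 <= fit r S v / totfit r S / (outdeg E v)%:R * (b%:R).
Proof.
apply: mulr_ge0; last exact: ler0n.
apply: mulr_ge0; last by rewrite invr_ge0 ler0n.
apply: divr_ge0; apply: ltW; [exact: fit_gt0 | exact: (totfit_gt0 x)].
Qed.

Lemma fit_ne (x v : V) : v != x -> fit r [set x] v = 1.
Proof. by move=> hv; rewrite /fit finset.in_set1 (negPf hv). Qed.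

Lemma W_eq (x : V) : totfit r [set x] = r + \sum_(v | v != x) 1.
Proof.
rewrite /totfit (bigD1 x) //= /fit finset.in_set1 eqxx; congr (_ + _).
by apply: eq_bigr => v hv; rewrite finset.in_set1 (negPf hv).
Qed.

Lemma set1_ne0 (x : V) : ([set x] == finset.set0) = false.
Proof. by apply/negbTE/negP => /eqP/setP/(_ x); rewrite !inE eqxx. Qed.

Lemma upd_ne (x v w : V) : v != x ->
  ([set x] == moran_update [set x] v w) = (w != x).
Proof.
move=> hv; rewrite /moran_update finset.in_set1 (negPf hv).
case: (eqVneq w x) => [->|hw]; first by rewrite finset.setDv set1_ne0.
apply/eqP/setP => y; rewrite !inE; case: (eqVneq y x) => [->|_] /=.
  by rewrite eq_sym hw.
by rewrite andbF.
Qed.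

Lemma cnt (x v : V) : \sum_(w | E v w) ((w != x)%:R : R) = (outdeg E v)%:R - (E v x)%:R.
Proof.
have h1 : \sum_(w | E v w) (1 : R) = (outdeg E v)%:R.
  have -> : \sum_(w | E v w) (1:R) = \sum_(w in [set w | E v w]) 1.
    by apply: eq_bigl => w; rewrite inE.
  by rewrite sumr_const.
have h2 : \sum_(w | E v w) ((w == x)%:R : R) = (E v x)%:R.
  rewrite big_mkcond (bigD1 x) //= eqxx big1 ?addr0; first by case: (E v x).
  by move=> w /negPf ->; case: (E v w).
rewrite -h1 -h2 -sumrB; apply: eq_bigr => w _.
by case: (w == x); rewrite /= ?subr0 ?subrr.
Qed.

Definition dd (x : V) : R := \sum_(v | v != x) (E v x)%:R / (outdeg E v)%:R.
Definition N1 (x : V) : R := \sum_(v | v != x) 1.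

Lemma dd_ge0 x : 0 <= dd x.
Proof. by apply: sumr_ge0 => v _; apply: divr_ge0; apply: ler0n. Qed.

Lemma dd_le x : dd x <= N1 x.
Proof.
apply: ler_sum => v _; rewrite ler_pdivrMr ?ltr0n ?out0 // mul1r ler_nat.
by case: (E v x) => //=; apply: out0.
Qed.

Lemma step_x0 x : dd x / totfit r [set x] <= moran_step E r [set x] finset.set0.
Proof.
rewrite /moran_step (bigD1 x) //=.
have h0 : 0 <= \sum_(w | E x w) (fit r [set x] x / totfit r [set x] / (outdeg E x)%:R *
      (finset.set0 == moran_update [set x] x w)%:R).
  by apply: sumr_ge0 => w _; apply: (T_ge0 x).
suff : dd x / totfit r [set x] <= \sum_(v | v != x) \sum_(w | E v w)
    (fit r [set x] v / totfit r [set x] / (outdeg E v)%:R *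
      (finset.set0 == moran_update [set x] v w)%:R) by lra.
rewrite /dd mulr_suml; apply: ler_sum => v hv.
case: (boolP (E v x)) => hE; last first.
  by rewrite mul0r mul0r; apply: sumr_ge0 => w _; apply: (T_ge0 x).
rewrite (bigD1 x) //= /moran_update finset.in_set1 (negPf hv) finset.setDv eqxx fit_ne //.
rewrite /= mulr1n mulr1 [X in X <= _]mulrAC lerDl.
by apply: sumr_ge0 => w _; rewrite !mulr_ge0 ?invr_ge0 ?ler0n ?ler01 ?ltW ?(totfit_gt0 x).

Qed.

Lemma step_xx x : (N1 x - dd x) / totfit r [set x] <= moran_step E r [set x] [set x].
Proof.
rewrite /moran_step (bigD1 x) //=.
have h0 : 0 <= \sum_(w | E x w) (fit r [set x] x / totfit r [set x] / (outdeg E x)%:R *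
      ([set x] == moran_update [set x] x w)%:R).
  by apply: sumr_ge0 => w _; apply: (T_ge0 x).
suff -> : \sum_(v | v != x) \sum_(w | E v w)
    (fit r [set x] v / totfit r [set x] / (outdeg E v)%:R *
      ([set x] == moran_update [set x] v w)%:R) = (N1 x - dd x) / totfit r [set x] by lra.
rewrite /N1 /dd -sumrB mulr_suml; apply: eq_bigr => v hv.
under eq_bigr => w _ do rewrite upd_ne // fit_ne //.
rewrite -mulr_sumr cnt.
have : (outdeg E v)%:R != 0 :> R by rewrite pnatr_eq0 -lt0n out0.
move=> hn; field.
by rewrite hn andbT; apply: lt0r_neq0; exact: (totfit_gt0 x).
Qed.


Lemma step00 (x : V) : moran_step E r finset.set0 finset.set0 = 1.
Proof.
rewrite /moran_step -[RHS](rowsum_aux x finset.set0); apply: eq_bigr => v _.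
apply: eq_bigr => w _.
by rewrite /moran_update finset.in_set0 finset.set0D eqxx mulr1.
Qed.

Lemma ext_lb (x : V) : dd x / (dd x + r) <= extinction_prob E r x.
Proof.
set W := totfit r [set x].
set a := fun t => moran_dist E r x t [set x].
set b := fun t => moran_dist E r x t finset.set0.
have Wp : 0 < W by exact: (totfit_gt0 x).
have hd0 := dd_ge0 x.
have hdN := dd_le x.
have WE : W = r + N1 x by rewrite /W W_eq.
set q := (N1 x - dd x) / W.
have q0 : 0 <= q by apply: divr_ge0; [lra | exact: ltW].
have q1 : q < 1.
  rewrite /q ltr_pdivrMr // mul1r WE. have hh : forall (A B C : R), 0 < C -> 0 <= B -> A - B < C + A by move=> *; lra. exact: hh.
have ha : forall t, q ^+ t <= a t.
  elim => [|t IH]; first by rewrite expr0 /a /= eqxx.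
  apply: (@le_trans _ _ (a t * moran_step E r [set x] [set x])).
    rewrite exprSr; apply: (@le_trans _ _ (a t * q)).
      exact: ler_wpM2r.
    by apply: ler_wpM2l; [exact: dist_ge0 | exact: step_xx].
  rewrite /a /= (bigD1 [set x]) //= lerDl.
  by apply: sumr_ge0 => S _; apply: mulr_ge0; [exact: dist_ge0 | exact: step_ge0].
have hb : forall t, b t + a t * (dd x / W) <= b t.+1.
  move=> t; rewrite /b /= (bigD1 finset.set0) //= (bigD1 [set x]) /=; last by rewrite set1_ne0.
  rewrite (step00 x) mulr1 lerD2l.
  have h1 : a t * (dd x / W) <= a t * moran_step E r [set x] finset.set0.
    by apply: ler_wpM2l; [exact: dist_ge0 | exact: step_x0].
  have h2 : 0 <= \sum_(S | (S != finset.set0) && (S != [set x])) moran_dist E r x t S * moran_step E r S finset.set0.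
    by apply: sumr_ge0 => S _; apply: mulr_ge0; [exact: dist_ge0 | exact: step_ge0].
  rewrite /a in h1 *; lra.
set c := dd x / (dd x + r).
have key : c * (1 - q) = dd x / W.
  rewrite /c /q WE; field.
  rewrite -WE; apply/andP; split; apply: lt0r_neq0 => //; exact: ltr_wpDl.
have hbl : forall t, c * (1 - q ^+ t) <= b t.
  elim => [|t IH]; first by rewrite expr0 subrr mulr0 /b /= eq_sym set1_ne0.
  apply: le_trans (hb t).
  have : c * (1 - q ^+ t.+1) = c * (1 - q ^+ t) + q ^+ t * (dd x / W).
    by rewrite -key exprSr; ring.
  move=> ->; apply: lerD => //; apply: ler_wpM2r => //.
  by apply: divr_ge0 => //; exact: ltW.
have mono : nondecreasing_seq b.
  apply/nondecreasing_seqP => t; apply: le_trans (hb t); rewrite lerDl.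
  apply: mulr_ge0; first exact: dist_ge0.
  by apply: divr_ge0 => //; exact: ltW.
have ub : has_ubound (range b).
  by exists 1 => _ [n _ <-]; exact: dist_le1.
have cvb := @nondecreasing_is_cvgn R b mono ub.
have lim1 : ((fun t => c - c * q ^+ t) @ \oo --> c - c * 0)%classic.
  apply: cvgB; first exact: cvg_cst.
  by apply: cvgMl_tmp; apply: cvg_expr; rewrite ger0_norm.
rewrite mulr0 subr0 in lim1.
apply: (ler_cvg_to lim1 cvb).
by apply: nearW => t; have := hbl t; rewrite mulrBr mulr1.
Qed.


Lemma dd_ge1 (n : nat) (x : V) (g : 'I_n -> V) : (0 < n)%N -> injective g ->
  (forall j, g j != x) -> (forall j, E (g j) x) -> (forall j, outdeg E (g j) <= n)%N ->
  1 <= dd x.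
Proof.
move=> n0 ginj gx gE gout.
pose e := fun v => (E v x)%:R / (outdeg E v)%:R : R.
have e0 : forall v, 0 <= e v by move=> v; apply: divr_ge0; apply: ler0n.
rewrite /dd big_mkcond /=.
apply: (@le_trans _ _ (\sum_v (if v \in g @: finset.setT then e v else 0))); last first.
  apply: ler_sum => v _; case: ifP => hv.
    have -> : v != x by case/finset.imsetP: hv => j _ ->; rewrite gx.
    by [].
  by case: ifP => // _; exact: e0.
rewrite -big_mkcond /= big_imset /=; last by move=> a b _ _; apply: ginj.
apply: (@le_trans _ _ (\sum_(j in (finset.setT : {set 'I_n})) (n%:R)^-1)).
  rewrite sumr_const cardsT card_ord -[_ *+ n]mulr_natr mulVf //.
  by rewrite pnatr_eq0 -lt0n.
apply: ler_sum => j _; rewrite /e gE /= mul1r.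
by rewrite lef_pV2 ?posrE ?ltr0n ?ler_nat ?out0.
Qed.

End Gen.
Section Mega.
Variables (k l m : nat).
Hypotheses (k0 : (0 < k)%N) (l0 : (0 < l)%N) (m0 : (0 < m)%N).
Notation V := (megastar_vertex k l m).
Notation E := (@megastar_edge k l m).
Definition res (i : 'I_l) (j : 'I_m) : V := inl (inl (i, j)).
Definition cli (i : 'I_l) (j : 'I_k) : V := inl (inr (i, j)).
Definition fee (i : 'I_l) : V := inr (inl i).
Definition cen : V := inr (inr tt).

Lemma mout0 v : (0 < outdeg E v)%N.
Proof.
apply/card_gt0P; case: v => [[[i j]|[i j]]|[i|[]]].
- by exists (fee i); rewrite inE /= eqxx.
- by exists cen; rewrite inE.
- by exists (cli i (Ordinal k0)); rewrite inE /= eqxx.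
- by exists (res (Ordinal l0) (Ordinal m0)); rewrite inE.
Qed.

Lemma out_le_img (n : nat) (v : V) (g : 'I_n -> V) :
  (forall w, E v w -> exists j, w = g j) -> (outdeg E v <= n)%N.
Proof.
move=> h; rewrite /outdeg.
apply: (@leq_trans #|g @: finset.setT|); last by rewrite (leq_trans (leq_imset_card _ _)) // cardsT card_ord.
apply: subset_leq_card; apply/fintype.subsetP => w; rewrite inE => /h [j ->].
by apply: imset_f; rewrite inE.
Qed.

Lemma out_cli i j : (outdeg E (cli i j) <= k)%N.
Proof.
apply: (@out_le_img k _ (fun j' => if j' == j then cen else cli i j')).
case => [[[i' j']|[i' j']]|[i'|[]]] //=.
- move=> /andP [/eqP <- hj]; exists j'; by rewrite eq_sym (negPf hj).
- by move=> _; exists j; rewrite eqxx.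
Qed.

Lemma out_fee i : (outdeg E (fee i) <= k)%N.
Proof.
apply: (@out_le_img k _ (fun j' => cli i j')).
by case => [[[i' j']|[i' j']]|[i'|[]]] //= /eqP <-; exists j'.
Qed.

Lemma out_res i j : (outdeg E (res i j) <= 1)%N.
Proof.
apply: (@out_le_img 1 _ (fun _ : 'I_1 => fee i)).
by case => [[[i' j']|[i' j']]|[i'|[]]] //= /eqP <-; exists ord0.
Qed.

End Mega.

Lemma half_bound (R : realType) (r d : R) : 1 < r -> 1 <= d -> 1 / (2 * r) <= d / (d + r).
Proof.
move=> r1 d1; rewrite -subr_ge0.
have -> : d / (d + r) - 1 / (2 * r) = (d * (2 * r - 1) - r) / (2 * r * (d + r)).
  field; apply/andP; split; apply: lt0r_neq0; lra.
apply: divr_ge0; nra.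
Qed.

Lemma fin_ineq (R : realType) (K M N A r : R) : 1 < r -> 0 < M -> 0 < N ->
  K * N <= A * M -> K / (2 * r * M) <= N^-1 * (A * (1 / (2 * r))).
Proof.
move=> r1 M0 N0 h; rewrite -subr_ge0.
have -> : N^-1 * (A * (1 / (2 * r))) - K / (2 * r * M) = (A * M - K * N) / (2 * r * M * N).
  field; rewrite !lt0r_neq0 //; lra.
apply: divr_ge0; first lra.
apply: mulr_ge0 => //; last exact: ltW.
apply: mulr_ge0 => //; last exact: ltW.
lra.
Qed.

Theorem lemma7p1 (R : realType) (r : R) (k l m : nat) :
  1 < r -> (0 < k)%N -> (0 < l)%N -> (0 < m)%N ->
  k%:R / (2 * r * (m + k)%:R) <=
  #|megastar_vertex k l m|%:R^-1 *
    \sum_(x0 : megastar_vertex k l m)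
       extinction_prob (@megastar_edge k l m) r x0.
Proof.
move=> r1 k0 l0 m0.
have r0 : 0 < r by lra.
have o0 := @mout0 k l m k0 l0 m0.
set c : R := 1 / (2 * r).
pose h := fun x : megastar_vertex k l m => if x is inl (inl _) then 0 else c.
have hx : forall x, h x <= extinction_prob (@megastar_edge k l m) r x.
  move=> x; apply: le_trans (@ext_lb R _ (@megastar_edge k l m) r r0 o0 x).
  have hd0 := @dd_ge0 R _ (@megastar_edge k l m) x.
  move: hd0; case: x => [[[i j]|[i j]]|[i|[]]] /= hd0.
  - by apply: divr_ge0 => //; apply: addr_ge0 => //; exact: ltW.
  - apply: half_bound => //.
    apply: (@dd_ge1 _ _ _ o0 k _ (fun j' => if j' == j then (inr (inl i) : megastar_vertex k l m) else inl (inr (i, j')))) => //.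
    + move=> a b /=; case: ifP => [/eqP ->|ha]; case: ifP => [/eqP ->|hb] //.
      by move=> [->].
    + move=> j'; case: (eqVneq j' j) => [_|hj] //=; by apply: contraNneq hj => -[->].
    + by move=> j'; case: ifP => [_|hj] /=; rewrite eqxx //= hj.
    + by move=> j'; case: ifP => _; [apply: (@out_fee k l m) | apply: (@out_cli k l m)].
  - apply: half_bound => //.
    apply: (@dd_ge1 _ _ _ o0 1 _ (fun _ : 'I_1 => (inl (inl (i, Ordinal m0)) : megastar_vertex k l m))) => //.
    + by move=> a b _; rewrite (ord1 a) (ord1 b).
    + by move=> _ /=; rewrite eqxx.
    + by move=> _; apply: (@out_res k l m).
  - apply: half_bound => //.
    apply: (@dd_ge1 _ _ _ o0 k _ (fun j => (inl (inr (Ordinal l0, j)) : megastar_vertex k l m))) => //.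
    + by move=> a b [->].
    + by move=> j'; apply: (@out_cli k l m).
have hs : \sum_x h x = c * ((l * k + l + 1)%N)%:R.
  rewrite !big_sumType /= big1_eq add0r !sumr_const !card_prod !card_ord card_unit.
  by rewrite mulr_natr -!mulrnDr addnA.
have hle : c * ((l * k + l + 1)%N)%:R <= \sum_x extinction_prob (@megastar_edge k l m) r x.
  by rewrite -hs; apply: ler_sum => x _; exact: hx.
have cu : #|megastar_vertex k l m| = (l * m + l * k + (l + 1))%N.
  by rewrite !card_sum !card_prod !card_ord; congr (_ + (_ + _)); exact: card_unit.
have N0 : (0 < #|megastar_vertex k l m|%:R :> R).
  by rewrite ltr0n cu !addn_gt0 l0 !orbT.
apply: (le_trans _ (ler_wpM2l _ hle)); last by rewrite invr_ge0 ltW.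
rewrite [c * _]mulrC; apply: fin_ineq => //.
  by rewrite ltr0n addn_gt0 k0 orbT.
rewrite -!natrM ler_nat cu.
nia.
Qed.
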